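(* Let $0<q<1$ and $q^*=2-q$. Let $X_1,X_2,\dots,X_n$ be positive i.i.d. random variables. Then for all $x>0$ and all $a>0$, $$\mathrm{Prob}\left(\frac1n\sum_{k=1}^nX_k\ge x\right)\le\exp_{q^*}(-anx)\,A^n(a),\qquad A(a)=\mathbb{E}\exp_q(aX_1).$$
   Context: For $q\in(0,2)$, $q\ne1$, the $q$-deformed exponential is $\exp_q(u)=[1+(1-q)u]_+^{1/(1-q)}$ for real $u$ (value in $[0,+\infty]$), where $[u]_+=\max(u,0)$. *)

(* Defs.v *)
From HB Require Import structures.
From mathcomp Require Import all_boot all_order all_algebra.
From mathcomp Require Import all_classical all_reals all_analysis.
Set Implicit Arguments. Unset Strict Implicit. Unset Printing Implicit Defensive.
Import Order.TTheory GRing.Theory Num.Theory.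
Local Open Scope classical_set_scope.
Local Open Scope ring_scope.

(* When the base [1+(1-q)u]_+ is 0, the value is 0 if the
   exponent 1/(1-q) is positive and +oo if it is negative. *)
Definition expq (R : realType) (q u : R) : \bar R :=
  let b := 1 + (1 - q) * u in
  if 0 < b then (b `^ (1 - q)^-1)%:E
  else if 0 < (1 - q)^-1 then 0%E else +oo%E.

Definition mutually_independent d (T : measurableType d) (R : realType)
  (P : probability T R) (n : nat) (X : nat -> {RV P >-> R}) : Prop :=
  forall (J : {set 'I_n}) (B : 'I_n -> set R),
    (forall j, measurable (B j)) ->
    P (\bigcap_(j in [set j | j \in J]) (X (val j) @^-1` B j)) =
    (\prod_(j in J) P (X (val j) @^-1` B j))%E.

Definition identically_distributed d (T : measurableType d) (R : realType)
  (P : probability T R) (n : nat) (X : nat -> {RV P >-> R}) : Prop :=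
  forall (i j : 'I_n) (B : set R), measurable B ->
    P (X (val i) @^-1` B) = P (X (val j) @^-1` B).

(* Main.v *)
Require Import Defs.
From HB Require Import structures.
From mathcomp Require Import all_boot all_order all_algebra.
From mathcomp Require Import all_classical all_reals all_analysis.
From mathcomp Require Import measurable_realfun.
From mathcomp Require Import ring lra.
Import Order.TTheory GRing.Theory Num.Theory.
Local Open Scope classical_set_scope.
Local Open Scope ring_scope.

Definition Gf {R : realType} (q a y : R) : R := (1 + (1 - q) * (a * y)) `^ (1 - q)^-1.

Lemma Gf_ge0 {R : realType} (q a y : R) : 0 <= Gf q a y.
Proof. exact: powR_ge0. Qed.

Lemma Gf0 {R : realType} (q a : R) : Gf q a 0 = 1.
Proof. by rewrite /Gf mulr0 mulr0 addr0 powR1. Qed.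

Lemma base_ge1 {R : realType} {q a y : R} : q < 1 -> 0 < a -> 0 <= y ->
  1 <= 1 + (1 - q) * (a * y).
Proof. move=> q1 a0 y0; rewrite lerDl; apply: mulr_ge0; [lra| exact: mulr_ge0 (ltW a0) y0]. Qed.

Lemma Gf_mono {R : realType} {q a y z : R} : q < 1 -> 0 < a ->
  0 <= y -> y <= z -> Gf q a y <= Gf q a z.
Proof.
move=> q1 a0 y0 yz; rewrite /Gf; apply: ge0_ler_powR.
- rewrite invr_ge0; lra.
- rewrite nnegrE; have := base_ge1 q1 a0 y0; lra.
- rewrite nnegrE; have := base_ge1 q1 a0 (le_trans y0 yz); lra.
- rewrite lerD2l ler_pM2l; last lra.
  by rewrite ler_pM2l.
Qed.

Lemma Gf_ge1 {R : realType} {q a y : R} : q < 1 -> 0 < a -> 0 <= y -> 1 <= Gf q a y.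
Proof. by move=> q1 a0 y0; rewrite -(Gf0 q a); apply: Gf_mono. Qed.

Lemma Gf_sub {R : realType} {q a y z : R} : q < 1 -> 0 < a -> 0 <= y -> 0 <= z ->
  Gf q a (y + z) <= Gf q a y * Gf q a z.
Proof.
move=> q1 a0 y0 z0; have := base_ge1 q1 a0 y0; have := base_ge1 q1 a0 z0.
have := base_ge1 q1 a0 (addr_ge0 y0 z0) => hyz hz hy.
rewrite /Gf -powRM; last 2 first.
- lra.
- lra.
apply: ge0_ler_powR.
- rewrite invr_ge0; lra.
- rewrite nnegrE; lra.
- rewrite nnegrE; apply: mulr_ge0; lra.
- have h : 0 <= (1 - q) * (a * y) * ((1 - q) * (a * z)).
    apply: mulr_ge0; apply: mulr_ge0; try lra; exact: mulr_ge0 (ltW a0) _.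
  rewrite mulrDl !mulrDr !mul1r mulr1; lra.
Qed.

Lemma Gf_prod {R : realType} {q a : R} {I : Type} (s : seq I) (m : I -> R) :
  q < 1 -> 0 < a -> (forall i, 0 <= m i) ->
  Gf q a (\sum_(i <- s) m i) <= \prod_(i <- s) Gf q a (m i).
Proof.
move=> q1 a0 m0; elim: s => [|i s IH]; first by rewrite !big_nil Gf0.
rewrite !big_cons; apply: le_trans (Gf_sub q1 a0 (m0 i) (sumr_ge0 _ (fun j _ => m0 j))) _.
by rewrite ler_pM2l ?(lt_le_trans ltr01 (Gf_ge1 q1 a0 (m0 i))).
Qed.
Lemma sum_prefix {R : realType} (c : nat -> R) (J N : nat) : (J <= N)%N ->
  \sum_(i < N.+1) c i * (i <= J)%N%:R = \sum_(i < J.+1) c i.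
Proof.
elim: N => [|N IH] JN.
  by move: JN; rewrite leqn0 => /eqP ->; rewrite !big_ord1 /= mulr1.
move: JN; rewrite leq_eqVlt => /orP[/eqP ->|JN].
  by apply: eq_bigr => i _; rewrite -ltnS ltn_ord mulr1.
have JN' : (J <= N)%N by rewrite -ltnS.
by rewrite big_ord_recr /= IH // leqNgt JN /= mulr0 addr0.
Qed.
Definition cc {R : realType} (q a d : R) (i : nat) : R :=
  Gf q a (i%:R * d) - (if i is j.+1 then Gf q a (j%:R * d) else 0).

Lemma cc_ge0 {R : realType} {q a d : R} i : q < 1 -> 0 < a -> 0 <= d -> 0 <= cc q a d i.
Proof.
move=> q1 a0 d0; rewrite /cc; case: i => [|i]; first by rewrite subr0 Gf_ge0.
rewrite subr_ge0; apply: Gf_mono => //; first exact: mulr_ge0.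
by rewrite ler_wpM2r // ler_nat.
Qed.

Lemma cc_tele {R : realType} (q a d : R) m :
  \sum_(i < m.+1) cc q a d i = Gf q a (m%:R * d).
Proof.
elim: m => [|m IH]; first by rewrite big_ord1 /cc subr0.
by rewrite big_ord_recr /= IH /cc addrC subrK.
Qed.

Definition jdx {R : realType} (d : R) (N : nat) (y : R) : nat := minn N (Num.truncn (y / d)).

Lemma step_expand {R : realType} (q a d : R) (N : nat) (y : R) : 0 < d -> 0 <= y ->
  \sum_(i < N.+1) cc q a d i * \1_[set z | i%:R * d <= z] y =
  Gf q a ((jdx d N y)%:R * d).
Proof.
move=> d0 y0.
transitivity (\sum_(i < N.+1) cc q a d i * (i <= jdx d N y)%N%:R).
  apply: eq_bigr => i _; congr (_ * _); rewrite indicE /jdx leq_min.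
  rewrite (_ : (y \in _) = (i%:R * d <= y)); last by apply/idP/idP => [/set_mem|/mem_set].
  rewrite -ltnS ltn_ord /= truncn_ge_nat ?divr_ge0 ?(ltW d0) //.
  by rewrite ler_pdivlMr.
by rewrite sum_prefix ?geq_minl // cc_tele.
Qed.
Lemma prod_lower {R : realType} {q a d x : R} {n N : nat} (Y : 'I_n -> R) :
  q < 1 -> 0 < a -> 0 < d -> d <= x -> n%:R * x < N%:R * d ->
  (forall k, 0 <= Y k) -> n%:R * x <= \sum_(k < n) Y k ->
  Gf q a (n%:R * x - n%:R * d) <= \prod_(k < n) Gf q a ((jdx d N (Y k))%:R * d).
Proof.
move=> q1 a0 d0 dx Nd Y0 hS.
have m0 : forall k, 0 <= (jdx d N (Y k))%:R * d by move=> k; exact: mulr_ge0 (ltW d0).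
apply: le_trans (Gf_prod (index_enum 'I_n) (fun k => (jdx d N (Y k))%:R * d) q1 a0 m0); apply: Gf_mono => //.
  by rewrite subr_ge0 ler_wpM2l.
have [[k hk]|nok] := pselect (exists k, (N <= Num.truncn (Y k / d))%N).
  rewrite (bigD1 k) //= /jdx (minn_idPl hk).
  have : 0 <= \sum_(j < n | j != k) (jdx d N (Y j))%:R * d by apply: sumr_ge0 => j _; exact: m0.
  have : 0 <= n%:R * d by exact: mulr_ge0 (ltW d0).
  lra.
have hj k : (Y k - d <= (jdx d N (Y k))%:R * d).
  have hk : (Num.truncn (Y k / d) < N)%N by rewrite ltnNge; apply/negP => h; apply: nok; exists k.
  rewrite /jdx (minn_idPr (ltnW hk)).
  have := truncnS_gt (Y k / d).
  rewrite ltr_pdivrMr // => h2.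
  rewrite -natr1 mulrDl mul1r in h2; lra.
apply: le_trans (ler_sum _ (fun k _ => hj k)).
rewrite sumrB sumr_const card_ord -mulr_natl; lra.
Qed.
Lemma int_simple d (T : measurableType d) (R : realType)
  (mu : {measure set T -> \bar R}) (I : Type) (s : seq I) (w : I -> R) (C : I -> set T) :
  (forall i, 0 <= w i) -> (forall i, measurable (C i)) ->
  (\int[mu]_t (\sum_(i <- s) w i * \1_(C i) t)%:E = \sum_(i <- s) (w i)%:E * mu (C i))%E.
Proof.
move=> w0 mC.
under eq_integral do rewrite -sumEFin.
rewrite ge0_integral_sum //; last first.
- by move=> i t _; rewrite lee_fin; apply: mulr_ge0 => //; rewrite indicE.
- move=> i; apply/measurable_EFinP; apply: measurable_funM; first exact: measurable_cst.
  exact: measurable_indic.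
apply: eq_bigr => i _.
rewrite (@eq_integral _ _ _ mu _ (fun t => (w i)%:E * (\1_(C i) t)%:E)%E); last by move=> t _; rewrite EFinM.
have mi : measurable_fun setT (fun t => (\1_(C i) t)%:E : \bar R).
  by apply/measurable_EFinP; exact: measurable_indic.
have i0 : forall t, setT t -> (0 <= (\1_(C i) t)%:E :> \bar R)%E.
  by move=> t _; rewrite lee_fin indicE.
rewrite (ge0_integralZl_EFin _ _ i0 mi) //.
by rewrite integral_indic // setIT.
Qed.

Lemma prod_indic {T : Type} {R : realType} (n : nat) (B : 'I_n -> set T) (t : T) :
  \prod_(k < n) (\1_(B k) t : R) =
  \1_(\bigcap_(j in [set j | j \in [set: 'I_n]%SET]) B j) t.
Proof.
have [h|h] := pselect (forall k, B k t).
  rewrite indicE mem_set; last by move=> j _; exact: h.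
  by rewrite big1 // => k _; rewrite indicE mem_set.
move/existsNP: h => [k hk].
rewrite (bigD1 k) //= [X in X * _]indicE memNset // mul0r indicE memNset //.
by move=> hc; apply: hk; apply: hc; rewrite /= inE.
Qed.

Lemma mge {R : realType} (c : R) : measurable [set z : R | c <= z].
Proof.
have -> : [set z : R | c <= z] = [set` `[c, +oo[] by apply/seteqP; split => z /=; rewrite in_itv /= andbT.
exact: measurable_itv.
Qed.

Lemma int_const_indic d (T : measurableType d) (R : realType)
  (mu : {measure set T -> \bar R}) (c : R) (C : set T) :
  0 <= c -> measurable C ->
  (\int[mu]_t (c * \1_C t)%:E = c%:E * mu C)%E.
Proof.
move=> c0 mC; have := @int_simple d T R mu unit [:: tt] (fun _ => c) (fun _ => C) (fun _ => c0) (fun _ => mC).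
rewrite big_seq1 => <-; apply: eq_integral => t _; by rewrite big_seq1.
Qed.

Lemma lee_expn {R : realType} (x y : \bar R) n : (0 <= x)%E -> (x <= y)%E -> (x ^+ n <= y ^+ n)%E.
Proof.
move=> x0 xy; elim: n => [|n IH]; first by rewrite !expe0.
by rewrite !expeS; apply: lee_pmul => //; exact: expe_ge0.
Qed.
Lemma key d (T : measurableType d) (R : realType) (P : probability T R) (q : R) (n : nat)
  (X : nat -> {RV P >-> R}) (x a δ : R) :
  0 < q -> q < 1 -> (0 < n)%N ->
  @mutually_independent _ _ _ P n X -> @identically_distributed _ _ _ P n X ->
  (forall k t, (k < n)%N -> 0 < X k t) ->
  0 < x -> 0 < a -> 0 < δ -> δ <= x ->
  (P [set t | (x <= n%:R^-1 * \sum_(k < n) X k t)%R] * (Gf q a (n%:R * x - n%:R * δ))%:E <=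
   (\int[P]_t (Gf q a (X 0%N t))%:E) ^+ n)%E.
Proof.
move=> q0 q1 n0 hind hid Xpos x0 a0 d0 dx.
set N := (Num.truncn (n%:R * x / δ)).+1.
have NdP : n%:R * x < N%:R * δ by rewrite -ltr_pdivrMr // truncnS_gt.
pose A k i := X k @^-1` [set z | i%:R * δ <= z].
have mA k i : measurable (A k i) by exact: measurable_funPTI (mge _).
pose pr k i := fine (P (A k i)).
have prE k i : P (A k i) = (pr k i)%:E by rewrite fineK // fin_num_measure.
have prid (k : 'I_n) i : pr k i = pr 0%N i.
  by rewrite /pr /A (hid k (Ordinal n0)) //; exact: mge.
pose w (f : {ffun 'I_n -> 'I_N.+1}) := \prod_(k < n) cc q a δ (f k).
pose Cf (f : {ffun 'I_n -> 'I_N.+1}) := \bigcap_(j in [set j | j \in [set: 'I_n]%SET])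
   (X (val j) @^-1` [set z | (f j)%:R * δ <= z]).
have mCf f : measurable (Cf f).
  apply: fin_bigcap_measurable; first exact: finite_finset.
  by move=> j _; exact: mA.
have cc0 i : 0 <= cc q a δ i := cc_ge0 i q1 a0 (ltW d0).
have w0 f : 0 <= w f by apply: prodr_ge0 => k _; exact: cc0.
have hexp t : \prod_(k < n) Gf q a ((jdx δ N (X k t))%:R * δ) = \sum_(f : {ffun 'I_n -> 'I_N.+1}) w f * \1_(Cf f) t.
  transitivity (\prod_(k < n) \sum_(i < N.+1) cc q a δ i * \1_(A k i) t).
    apply: eq_bigr => k _; symmetry; exact: step_expand _ _ _ _ d0 (ltW (Xpos _ _ (ltn_ord k))).
  rewrite bigA_distr_bigA; apply: eq_bigr => f _.
  by rewrite big_split /= prod_indic.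
have hint : (\int[P]_t (\sum_(f : {ffun 'I_n -> 'I_N.+1}) w f * \1_(Cf f) t)%:E =
    ((\sum_(i < N.+1) cc q a δ i * pr 0%N i) ^+ n)%:E)%E.
  rewrite int_simple //.
  transitivity (\sum_(f : {ffun 'I_n -> 'I_N.+1}) ((\prod_(k < n) (cc q a δ (f k) * pr 0%N (f k)))%:E))%E.
    apply: eq_bigr => f _.
    have := hind [set: 'I_n]%SET (fun j => [set z | (f j)%:R * δ <= z]) (fun j => mge _).
    rewrite /Cf /= => ->.
    rewrite (eq_bigl xpredT); last by move=> j; rewrite inE.
    rewrite (eq_bigr (fun j => (pr 0%N (f j))%:E)); last first.
      by move=> j _; rewrite -(prid j); exact: prE.
    by rewrite prodEFin -EFinM -big_split.
  rewrite sumEFin; congr (_%:E).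
  rewrite -(bigA_distr_bigA (fun (k : 'I_n) (i : 'I_N.+1) => cc q a δ i * pr 0%N i)) /=.
  by rewrite prodr_const card_ord.
set E := [set t | (x <= n%:R^-1 * \sum_(k < n) X k t)%R].
have hn : 0 < n%:R :> R by rewrite ltr0n.
have mE : measurable E.
  have mS : measurable_fun setT (fun t => n%:R^-1 * \sum_(k < n) X k t).
    apply: measurable_funM; first exact: measurable_cst.
    by apply: measurable_sum => k; exact: measurable_funP.
  rewrite -[E]setTI; exact: mS measurableT _ (mge x).
have G0 : 0 <= Gf q a (n%:R * x - n%:R * δ) := Gf_ge0 _ _ _.
rewrite muleC -int_const_indic //.
apply: le_trans (_ : _ <= \int[P]_t (\sum_(f : {ffun 'I_n -> 'I_N.+1}) w f * \1_(Cf f) t)%:E)%E _.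
  apply: ge0_le_integral => //.
  - by move=> t _; rewrite lee_fin mulr_ge0 // indicE.
  - apply/measurable_EFinP; apply: measurable_funM; first exact: measurable_cst.
    exact: measurable_indic.
  - apply/measurable_EFinP; apply: measurable_sum => f; apply: measurable_funM.
      exact: measurable_cst.
    exact: measurable_indic.
  - move=> t _; rewrite lee_fin -hexp.
    have [Et|Et] := pselect (E t).
      rewrite indicE mem_set // mulr1.
      apply: (prod_lower (fun k : 'I_n => X k t)) => //.
      + by move=> k; exact: ltW (Xpos _ _ (ltn_ord k)).
      + move: Et; rewrite /E /= -(ler_pM2l hn) mulrA mulfV ?gt_eqF // mul1r.
        by rewrite mulrC.
    rewrite indicE memNset // mulr0; apply: prodr_ge0 => k _; exact: Gf_ge0.
rewrite hint.
have hsingle : (\int[P]_t (\sum_(i < N.+1) cc q a δ i * \1_(A 0%N i) t)%:E =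
    (\sum_(i < N.+1) cc q a δ i * pr 0%N i)%:E)%E.
  rewrite int_simple // -sumEFin; apply: eq_bigr => i _; by rewrite EFinM -prE.
rewrite EFin_expe -hsingle; apply: lee_expn.
  by apply: integral_ge0 => t _; rewrite lee_fin; apply: sumr_ge0 => i _; rewrite mulr_ge0 // indicE.
apply: ge0_le_integral => //.
- by move=> t _; rewrite lee_fin; apply: sumr_ge0 => i _; rewrite mulr_ge0 // indicE.
- apply/measurable_EFinP; apply: measurable_sum => i; apply: measurable_funM.
    exact: measurable_cst.
  exact: measurable_indic.
- apply/measurable_EFinP; rewrite /Gf.
  apply: (measurableT_comp (measurable_powR _)) => /=.
  apply: measurable_funD; first exact: measurable_cst.
  apply: measurable_funM; first exact: measurable_cst.
  apply: measurable_funM; first exact: measurable_cst.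
  exact: measurable_funP.
- move=> t _; rewrite lee_fin.
  have Xt0 : 0 <= X 0%N t := ltW (Xpos _ _ n0).
  rewrite (_ : \sum_(i < N.+1) cc q a δ i * \1_(A 0%N i) t = Gf q a ((jdx δ N (X 0%N t))%:R * δ)); last exact: step_expand.
  apply: Gf_mono => //; first exact: mulr_ge0 (ltW d0).
  apply: (@le_trans _ _ ((Num.truncn (X 0%N t / δ))%:R * δ)).
    by rewrite ler_wpM2r ?(ltW d0) // ler_nat /jdx geq_minr.
  by rewrite -ler_pdivlMr // truncn_le divr_ge0 // ltW.
Qed.
Lemma final_real {R : realType} (q a x p B : R) (n : nat) :
  0 < q -> q < 1 -> 0 < a -> 0 < x -> (0 < n)%N -> 0 <= p -> 0 <= B ->
  (forall δ, 0 < δ -> δ <= x -> p * Gf q a (n%:R * x - n%:R * δ) <= B) ->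
  p * Gf q a (n%:R * x) <= B.
Proof.
move=> q0 q1 a0 x0 n0 p0 B0 hk.
have hn : 0 < n%:R :> R by rewrite ltr0n.
apply/ler_addgt0Pr => e e0.
set e' := e / (B + 1).
have e'0 : 0 < e' by rewrite divr_gt0 //; lra.
set u := (1 + e') `^ (1 - q) - 1.
have u0 : 0 < u.
  have h1 : (1 : R) = 1 `^ (1 - q) by rewrite powR1.
  rewrite /u subr_gt0 {1}h1.
  apply: gt0_ltr_powR; rewrite ?nnegrE; lra.
set c := (1 - q) * a * n%:R.
have c0 : 0 < c by rewrite /c !mulr_gt0 //; lra.
set δ := Num.min x (u / c).
have d0 : 0 < δ by rewrite lt_min x0 divr_gt0.
have dx : δ <= x by rewrite ge_min lexx.
have du : δ <= u / c by rewrite ge_min lexx orbT.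
have G2 : Gf q a (n%:R * δ) <= 1 + e'.
  apply: (@le_trans _ _ (Gf q a (n%:R * (u / c)))).
    apply: Gf_mono => //; first by rewrite mulr_ge0 // ltW.
    by rewrite ler_wpM2l // ltW.
  rewrite /Gf (_ : (1 - q) * (a * (n%:R * (u / c))) = u); last first.
    by rewrite /c; field; apply/and3P; split; rewrite ?gt_eqF //; lra.
  rewrite /u addrC subrK -powRrM mulfV ?powRr1 //; first lra.
  by rewrite gt_eqF //; lra.
have G1 := hk δ d0 dx.
have Gs : Gf q a (n%:R * x) <= Gf q a (n%:R * x - n%:R * δ) * Gf q a (n%:R * δ).
  rewrite -{1}(subrK (n%:R * δ) (n%:R * x)); apply: Gf_sub => //.
    by rewrite subr_ge0 ler_wpM2l // ltW.
  by rewrite mulr_ge0 // ltW.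
have Ga := Gf_ge0 q a (n%:R * x - n%:R * δ).
have Gb := Gf_ge0 q a (n%:R * δ).
apply: (@le_trans _ _ (p * (Gf q a (n%:R * x - n%:R * δ) * Gf q a (n%:R * δ)))).
  by rewrite ler_wpM2l.
rewrite mulrA; apply: (@le_trans _ _ (B * (1 + e'))).
  apply: (@le_trans _ _ (B * Gf q a (n%:R * δ))); first by rewrite ler_wpM2r.
  by rewrite ler_wpM2l.
have : B * e' <= e.
  rewrite /e' mulrA ler_pdivrMr; last lra.
  by rewrite mulrC ler_wpM2l; lra.
lra.
Qed.

Theorem proposition7 (d : measure_display) (T : measurableType d)
  (R : realType) (P : probability T R) (q : R) (n : nat)
  (X : nat -> {RV P >-> R}) :
  0 < q < 1 -> (0 < n)%N ->
  @mutually_independent _ _ _ P n X ->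
  @identically_distributed _ _ _ P n X ->
  (forall k t, (k < n)%N -> 0 < X k t) ->
  forall x a : R, 0 < x -> 0 < a ->
  (P [set t | (x <= n%:R^-1 * \sum_(k < n) X k t)%R] <=
   expq (2 - q) (- (a * n%:R * x)) *
   (\int[P]_t expq q (a * X 0%N t)) ^+ n)%E.
Proof.
move=> /andP[q0 q1] n0 hind hid Xpos x a x0 a0.
have hn : 0 < n%:R :> R by rewrite ltr0n.
have BE : (\int[P]_t expq q (a * X 0%N t) = \int[P]_t (Gf q a (X 0%N t))%:E)%E.
  apply: eq_integral => t _; rewrite /expq /Gf /=.
  have Xt := Xpos 0%N t n0.
  have h : 0 < (1 - q) * (a * X 0%N t) by rewrite !mulr_gt0 //; lra.
  by rewrite ifT //; lra.
have eE : expq (2 - q) (- (a * n%:R * x)) = ((Gf q a (n%:R * x))^-1)%:E.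
  rewrite /expq /=.
  have -> : 1 + (1 - (2 - q)) * - (a * n%:R * x) = 1 + (1 - q) * (a * (n%:R * x)) by ring.
  have h : 0 < (1 - q) * (a * (n%:R * x)) by rewrite !mulr_gt0 //; lra.
  rewrite ifT; last lra.
  rewrite /Gf (_ : 1 - (2 - q) = - (1 - q)); last by ring.
  by rewrite invrN powRN.
set E := [set t | (x <= n%:R^-1 * \sum_(k < n) X k t)%R].
have mE : measurable E.
  have mS : measurable_fun setT (fun t => n%:R^-1 * \sum_(k < n) X k t).
    apply: measurable_funM; first exact: measurable_cst.
    by apply: measurable_sum => k; exact: measurable_funP.
  rewrite -[E]setTI; exact: mS measurableT _ (mge x).
have kk := fun δ (d0 : 0 < δ) (dx : δ <= x) => @key _ _ _ P q n X x a δ q0 q1 n0 hind hid Xpos x0 a0 d0 dx.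
rewrite eE BE.
have B0 : (0 <= \int[P]_t (Gf q a (X 0%N t))%:E)%E.
  by apply: integral_ge0 => t _; rewrite lee_fin Gf_ge0.
have Gpos : 0 < Gf q a (n%:R * x).
  by apply: lt_le_trans (Gf_ge1 q1 a0 _); rewrite ?ltr01 // mulr_ge0 // ltW.
move: B0 kk; case: (\int[P]_t (Gf q a (X 0%N t))%:E)%E => [b| |] B0 kk; last first.
    by move: B0; rewrite leNgt ltNye.
  2: {
  rewrite -EFin_expe -EFinM.
  rewrite -(@fineK _ (P E)); last exact: fin_num_measure.
  rewrite lee_fin mulrC ler_pdivlMr //.
  apply: final_real => //.
  - by rewrite fine_ge0 // measure_ge0.
  - by rewrite exprn_ge0 // -lee_fin.
  - move=> δ d0 dx; have := kk δ d0 dx.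
    rewrite -(@fineK _ (P E)); last exact: fin_num_measure.
    by rewrite -EFin_expe -EFinM lee_fin.
  }
have -> : ((+oo : \bar R) ^+ n = +oo)%E.
  move: n0; case: (n) => // m _; elim: m => // m IH; by rewrite expeS IH mulyy.
rewrite mulry gtr0_sg ?invr_gt0 // mul1e; exact: leey.
Qed.
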